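(* Let $(X,d)$ be a compact metric space, $f_{0,\infty}=\{f_n\}_{n=0}^\infty$ a sequence of continuous self-maps of $X$, and $A=\{k^i\}_{i=1}^{\infty}$ for some integer $k\geq1$. Then \[h_{A}(f_{0,\infty}^{k^n})=h_{A}(f_{0,\infty}),\quad n\geq1.\]
   Context: $f_i^n=f_{i+n-1}\circ\cdots\circ f_i$ ($n\ge1$), $f_i^0=\mathrm{id}$, $f_i^{-n}(B)=(f_i^n)^{-1}(B)$. For $m\ge1$, the $m$-th compositions system is $f_{0,\infty}^m=\{f_{jm}^m\}_{j=0}^\infty$, i.e. the sequence of maps $f_{jm+m-1}\circ\cdots\circ f_{jm}$. For a sequence $g_{0,\infty}$ of continuous self-maps and a sequence $A=\{a_i\}$ of nonnegative integers, $h_A(g_{0,\infty})=\sup_{\mathscr A}\limsup_{m\to\infty}\frac1m\log\mathcal N(\bigvee_{i=1}^m g_0^{-a_i}\mathscr A)$ over finite open covers $\mathscr A$ of $X$, with $\bigvee$ the common refinement, $g_0^{-a}\mathscr A=\{(g_0^a)^{-1}U:U\in\mathscr A\}$, and $\mathcal N$ the minimal cardinality of a subcover. *)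

(* Defs.v *)
From HB Require Import structures.
From mathcomp Require Import all_boot all_order all_algebra.
From mathcomp Require Import all_classical all_reals all_analysis.
Set Implicit Arguments. Unset Strict Implicit. Unset Printing Implicit Defensive.
Import Order.TTheory GRing.Theory Num.Theory.
Local Open Scope classical_set_scope.
Local Open Scope ring_scope.

Fixpoint ncomp (X : Type) (f : nat -> X -> X) (i n : nat) : X -> X :=
  match n with
  | 0 => id
  | n'.+1 => f (i + n')%N \o ncomp f i n'
  end.

Definition comp_system (X : Type) (f : nat -> X -> X) (m : nat) : nat -> X -> X :=
  fun j => ncomp f (j * m)%N m.

Definition finite_open_cover (X : topologicalType) (C : set (set X)) : Prop :=
  finite_set C /\ (forall U, C U -> open U) /\ (\bigcup_(U in C) U = setT).

Definition join_preim (X : Type) (g : nat -> X -> X) (a : nat -> nat)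
  (C : set (set X)) (m : nat) : set (set X) :=
  [set V | exists U : nat -> set X,
     (forall i, (1 <= i <= m)%N -> C (U i)) /\
     V = \bigcap_(i in [set i | (1 <= i <= m)%N]) (ncomp g 0 (a i) @^-1` U i)].

Definition Ncov {R : realType} (X : Type) (C : set (set X)) : \bar R :=
  ereal_inf [set (n%:R)%:E | n in [set n : nat | exists V : 'I_n -> set X,
      (forall i, C (V i)) /\ (forall x, exists i, V i x)]].

Definition hA {R : realType} (X : topologicalType) (a : nat -> nat)
  (g : nat -> X -> X) : \bar R :=
  ereal_sup [set limn_esup (fun m : nat =>
       ((m%:R)^-1 * ln (fine (@Ncov R X (join_preim g a C m))))%:E)
    | C in @finite_open_cover X].

(* Main.v *)
Require Import Defs.
From HB Require Import structures.
From mathcomp Require Import all_boot all_order all_algebra.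
From mathcomp Require Import all_classical all_reals all_analysis.
From mathcomp Require Import ring lra.
Set Implicit Arguments. Unset Strict Implicit. Unset Printing Implicit Defensive.
Import Order.TTheory GRing.Theory Num.Theory.
Local Open Scope classical_set_scope.
Local Open Scope ring_scope.

Section Covers.
Variables (R : realType) (X : Type).
Implicit Types (A B : set (set X)) (s t : seq (set X)).

Definition covs A s := (forall V, V \in s -> A V) /\ (forall x, exists2 V, V \in s & V x).

Definition Qc A n := exists V : 'I_n -> set X, (forall i, A (V i)) /\ (forall x, exists i, V i x).

Lemma Qc_covs A s : covs A s -> Qc A (size s).
Proof.
move=> [h1 h2]; exists (fun i => nth set0 s i); split.
  by move=> i; apply: h1; rewrite mem_nth.
move=> x; have [V Vs Vx] := h2 x.
have hi : (index V s < size s)%N by rewrite index_mem.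
by exists (Ordinal hi); rewrite /= nth_index.
Qed.

Lemma covs_Qc A n : Qc A n -> exists s, covs A s /\ size s = n.
Proof.
move=> [V [h1 h2]]; exists [seq V i | i <- enum 'I_n]; split; last first.
  by rewrite size_map size_enum_ord.
split; first by move=> W /mapP [i _ ->].
move=> x; have [i Vi] := h2 x; exists (V i) => //.
by apply: map_f; rewrite mem_enum.
Qed.

Definition Nn A : R := fine (@Ncov R X A).

Lemma Ncov_min A s : covs A s -> exists s', [/\ covs A s', @Ncov R X A = (size s')%:R%:E
   & forall t, covs A t -> (size s' <= size t)%N].
Proof.
move=> hs.
have exP : exists n, `[< Qc A n >] by exists (size s); apply/asboolP; exact: Qc_covs.
case: (ex_minnP exP) => N /asboolP QN Hmin.
have [s' [hs' sz]] := covs_Qc QN.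
exists s'; split => //.
- rewrite /Ncov sz; apply/eqP; rewrite eq_le; apply/andP; split.
    by apply: ereal_inf_lbound; exists N.
  apply: le_ereal_inf_tmp => _ [m Qm <-]; rewrite lee_fin ler_nat.
  by apply: Hmin; apply/asboolP.
- move=> t ht; rewrite sz; apply: Hmin; apply/asboolP; exact: Qc_covs.
Qed.

Lemma Nn_le A s : covs A s -> Nn A <= (size s)%:R.
Proof.
move=> hs; have [s' [_ e h]] := Ncov_min hs.
by rewrite /Nn e /= ler_nat; apply: h.
Qed.

Lemma Nn_attained A s : covs A s -> exists s', covs A s' /\ Nn A = (size s')%:R.
Proof. by move=> hs; have [s' [h1 h2 _]] := Ncov_min hs; exists s'; rewrite /Nn h2. Qed.

Lemma Nn_ge1 A s (x0 : X) : covs A s -> 1 <= Nn A.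
Proof.
move=> hs; have [s' [[_ h] ->]] := Nn_attained hs.
have [V Vs _] := h x0; rewrite ler1n; case: s' Vs {h} => //.
Qed.

Lemma Nn_empty A : (X -> False) -> Nn A = 0.
Proof.
move=> nX; have hs : covs A [::] by split => // x; case: (nX x).
have [s' [h1 h2 h3]] := Ncov_min hs.
by rewrite /Nn h2 /=; have := h3 _ hs; rewrite leqn0 => /eqP ->.
Qed.

Lemma refine_covs A B s : (forall V, A V -> exists W, B W /\ V `<=` W) ->
  covs A s -> exists t, covs B t /\ size t = size s.
Proof.
move=> hAB [h1 h2].
have : forall V, exists W, A V -> B W /\ V `<=` W.
  move=> V; case: (pselect (A V)) => [/hAB [W HW]|nA]; first by exists W.
  by exists set0.
case/choice => F HF.
exists (map F s); split; last by rewrite size_map.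
split; first by move=> W /mapP [V Vs ->]; have [] := HF V (h1 _ Vs).
move=> x; have [V Vs Vx] := h2 x; exists (F V); first exact: map_f.
by have [_] := HF V (h1 _ Vs); apply.
Qed.

Lemma Nn_refine A B s : (forall V, A V -> exists W, B W /\ V `<=` W) ->
  covs A s -> (exists t, covs B t) /\ Nn B <= Nn A.
Proof.
move=> hAB hs; have [s' [hs' ->]] := Nn_attained hs.
have [t [ht <-]] := refine_covs hAB hs'.
by split; [exists t | exact: Nn_le].
Qed.

Definition joinF A B := [set U | exists V W, [/\ A V, B W & U = V `&` W]].

Lemma Nn_join A B s t : covs A s -> covs B t ->
  (exists u, covs (joinF A B) u) /\ Nn (joinF A B) <= Nn A * Nn B.
Proof.
move=> hs ht; have [s' [[a1 a2] ->]] := Nn_attained hs.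
have [t' [[b1 b2] ->]] := Nn_attained ht.
have hu : covs (joinF A B) [seq V `&` W | V <- s', W <- t'].
  split.
    move=> U /allpairsP [[V W] /= [Vs Wt ->]].
    by exists V, W; split => //; [apply: a1 | apply: b1].
  move=> x; have [V Vs Vx] := a2 x; have [W Wt Wx] := b2 x.
  by exists (V `&` W) => //; apply: allpairs_f.
split; first by exists [seq V `&` W | V <- s', W <- t'].
by rewrite -natrM -(size_allpairs (fun V W : set X => V `&` W)); apply: Nn_le.
Qed.

End Covers.

Lemma ncompD (X : Type) (f : nat -> X -> X) i p q x :
  ncomp f i (p + q) x = ncomp f (i + p) q (ncomp f i p x).
Proof.
elim: q => [|q IH]; first by rewrite addn0.
by rewrite addnS /= IH addnA.
Qed.

Lemma ncomp_sys (X : Type) (f : nat -> X -> X) K a x :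
  ncomp (comp_system f K) 0 a x = ncomp f 0 (a * K) x.
Proof.
elim: a => [|a IH] //=.
by rewrite IH mulSnr ncompD add0n /comp_system.
Qed.

Section Families.
Variables (X : Type) (f : nat -> X -> X) (k n : nat) (C : set (set X)).

Let Jf m := join_preim f (fun i => (k ^ i)%N) C m.
Let Jg m := join_preim (comp_system f (k ^ n)%N) (fun i => (k ^ i)%N) C m.
Let P j := [set (ncomp f 0 (k ^ j)%N) @^-1` U | U in C].

Lemma refA m V : Jf (m + n)%N V -> exists W, Jg m W /\ V `<=` W.
Proof.
move=> [U [hU ->]].
exists (\bigcap_(i in [set i | (1 <= i <= m)%N])
   (ncomp (comp_system f (k ^ n)%N) 0 (k ^ i)%N @^-1` U (i + n)%N)).
split.
  exists (fun i => U (i + n)%N); split => //.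
  move=> i /andP [h1 h2]; apply: hU.
  by rewrite (leq_trans h1 (leq_addr _ _)) /= leq_add2r h2.
move=> x Hx i /= /andP [h1 h2]; rewrite /preimage /= ncomp_sys -expnD.
apply: (Hx (i + n)%N).
by rewrite /= (leq_trans h1 (leq_addr _ _)) /= leq_add2r h2.
Qed.

Lemma refB m V : joinF (Jf n) (Jg m) V -> exists W, Jf (m + n)%N W /\ V `<=` W.
Proof.
move=> [_ [_ [[U1 [h1 ->]] [U2 [h2 ->]] ->]]].
exists (\bigcap_(i in [set i | (1 <= i <= m + n)%N])
   (ncomp f 0 (k ^ i)%N @^-1` (if (i <= n)%N then U1 i else U2 (i - n)%N))).
split.
  exists (fun i => if (i <= n)%N then U1 i else U2 (i - n)%N); split => //.
  move=> i /andP [i1 i2]; case: ifP => hin.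
    by apply: h1; rewrite i1 hin.
  by apply: h2; rewrite subn_gt0 ltnNge hin /= leq_subLR addnC.
move=> x [Vx Wx] i /= /andP [i1 i2]; rewrite /preimage /=; case: ifP => hin.
  by apply: (Vx i); rewrite /= i1 hin.
have := Wx (i - n)%N; rewrite /preimage /= ncomp_sys -expnD subnK; last first.
  by rewrite ltnW // ltnNge hin.
apply; by rewrite /= subn_gt0 ltnNge hin /= leq_subLR addnC.
Qed.

Lemma refC m V : joinF (Jf m) (P m.+1) V -> exists W, Jf m.+1 W /\ V `<=` W.
Proof.
move=> [_ [_ [[U1 [h1 ->]] [U0 CU0 <-] ->]]].
exists (\bigcap_(i in [set i | (1 <= i <= m.+1)%N])
   (ncomp f 0 (k ^ i)%N @^-1` (if (i <= m)%N then U1 i else U0))).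
split.
  exists (fun i => if (i <= m)%N then U1 i else U0); split => //.
  move=> i /andP [i1 i2]; case: ifP => hin //.
  by apply: h1; rewrite i1 hin.
move=> x [Vx Wx] i /= /andP [i1 i2]; rewrite /preimage /=; case: ifP => hin.
  by apply: (Vx i); rewrite /= i1 hin.
have -> : i = m.+1 by apply/eqP; rewrite eqn_leq i2 ltnNge hin.
exact: Wx.
Qed.

Lemma covJf0 : covs (Jf 0) [:: setT].
Proof.
split; last by move=> x; exists setT => //; rewrite mem_seq1.
move=> V; rewrite mem_seq1 => /eqP ->.
exists (fun _ => setT); split.
  by move=> i /andP [i1 i2]; move: (leq_trans i1 i2).
apply/seteqP; split => x // _ i /andP [i1 i2]; by move: (leq_trans i1 i2).
Qed.

End Families.
Section Analytic.
Variable R : realType.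

Lemma limsup_cmp (u v : nat -> R) (h : nat -> nat)
  (hh : forall M, exists N, forall m, (N <= m)%N -> (M <= h m)%N)
  (H : forall e : R, 0 < e -> exists N, forall m, (N <= m)%N -> u m <= v (h m) + e) :
  (limn_esup (fun m => (u m)%:E) <= limn_esup (fun m => (v m)%:E))%E.
Proof.
rewrite /limn_esup /limf_esup.
apply: le_ereal_inf_tmp => _ [W HW <-].
apply/lee_addgt0Pr => e e0.
have [M _ HM] := HW.
have [N1 HN1] := H e e0; have [N2 HN2] := hh M.
apply: (@le_trans _ _ (ereal_sup ((fun m => (u m)%:E) @` [set m | (maxn N1 N2 <= m)%N]))).
  by apply: ereal_inf_lbound; exists [set m | (maxn N1 N2 <= m)%N] => //; exists (maxn N1 N2).
apply: ge_ereal_sup => _ [m Hm <-].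
move: Hm; rewrite /= geq_max => /andP [h1 h2].
apply: (@le_trans _ _ ((v (h m))%:E + e%:E)%E).
  by rewrite -EFinD lee_fin HN1.
rewrite leeD2r //; apply: ereal_sup_ubound; exists (h m) => //; apply: HM; exact: HN2.
Qed.

Lemma small_eventually (D e : R) : 0 < e ->
  exists N, forall m, (N <= m)%N -> (m%:R)^-1 * D <= e.
Proof.
move=> e0; exists (Num.truncn (D / e)).+1 => m Hm.
have hm : D / e < m%:R.
  apply: (lt_le_trans (truncnS_gt _)); rewrite ler_nat //.
have m0 : 0 < m%:R :> R by rewrite ltr0n; apply: leq_trans Hm.
rewrite mulrC ler_pdivrMr //; rewrite ltr_pdivrMr // in hm.
by rewrite mulrC ltW.
Qed.

Lemma analytic (a b : nat -> R) (n : nat) (c : R) :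
  (forall m, 1 <= a m) -> (forall m, 1 <= b m) ->
  (forall m, b m <= a (m + n)%N) -> (forall m, a (m + n)%N <= a n * b m) ->
  (forall m, a m <= c ^+ m) ->
  limn_esup (fun m => ((m%:R)^-1 * ln (b m))%:E) =
  limn_esup (fun m => ((m%:R)^-1 * ln (a m))%:E).
Proof.
move=> a1 b1 ba ab ac.
have c1 : 1 <= c by apply: (le_trans (a1 1%N)); have := ac 1%N; rewrite expr1.
have c0 : 0 < c by apply: lt_le_trans c1.
have pos1 x : 1 <= x -> x \is Num.pos by move=> hx; rewrite posrE (lt_le_trans _ hx).
have lnA m : ln (a m) <= m%:R * ln c.
  rewrite (le_trans (_ : _ <= ln (c ^+ m))) //.
    by rewrite ler_ln //; [exact: pos1 | rewrite posrE exprn_gt0].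
  by rewrite lnXn // mulr_natl.
apply/eqP; rewrite eq_le; apply/andP; split.
- apply: (limsup_cmp (h := fun m => (m + n)%N)).
    by move=> M; exists M => m hm; apply: leq_trans hm (leq_addr _ _).
  move=> e e0; have [N HN] := small_eventually (n%:R * ln c) e0.
  exists (maxn N 1) => m; rewrite geq_max => /andP [hN hm1].
  have m0 : 0 < m%:R :> R by rewrite ltr0n.
  have mn0 : 0 < (m + n)%N%:R :> R by rewrite ltr0n addn_gt0 hm1.
  set L := ln (a (m + n)%N).
  set t := ((m + n)%N%:R)^-1 * L.
  have hL : L = (m + n)%N%:R * t by rewrite /t mulrA mulfV ?mul1r // gt_eqF.
  have ht : t <= ln c.
    by rewrite /t mulrC ler_pdivrMr // mulrC; apply: lnA.
  have hb : ln (b m) <= L by rewrite ler_ln //; exact: pos1.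
  apply: (@le_trans _ _ ((m%:R)^-1 * L)).
    by apply: ler_wpM2l hb; rewrite invr_ge0 ltW.
  rewrite hL natrD.
  have -> : (m%:R)^-1 * ((m%:R + n%:R) * t) = t + (m%:R)^-1 * (n%:R * t).
    by field; rewrite gt_eqF.
  rewrite lerD2l; apply: le_trans (HN m hN).
  apply: ler_wpM2l; first by rewrite invr_ge0 ltW.
  by apply: ler_wpM2l.
- apply: (limsup_cmp (h := fun m => (m - n)%N)).
    by move=> M; exists (M + n)%N => m hm; rewrite leq_subRL ?(leq_trans (leq_addl _ _) hm) // addnC.
  move=> e e0; have [N HN] := small_eventually (ln (a n)) e0.
  exists (maxn N n.+1) => m; rewrite geq_max => /andP [hN hm1].
  set j := (m - n)%N.
  have hj : m = (j + n)%N by rewrite /j subnK // ltnW.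
  have j0 : (0 < j)%N by rewrite /j subn_gt0.
  have m0 : 0 < m%:R :> R by rewrite ltr0n (leq_trans _ hm1).
  have jr0 : 0 < j%:R :> R by rewrite ltr0n.
  have hlnb : 0 <= ln (b j) by apply: ln_ge0.
  have hla : ln (a m) <= ln (a n) + ln (b j).
    rewrite -lnM ?pos1 //; rewrite ler_ln ?pos1 //; last first.
      by rewrite -[1]mulr1 ler_pM.
    by rewrite hj; apply: ab.
  apply: (@le_trans _ _ ((m%:R)^-1 * (ln (a n) + ln (b j)))).
    by apply: ler_wpM2l hla; rewrite invr_ge0 ltW.
  rewrite mulrDr addrC lerD //; last exact: HN.
  apply: ler_wpM2r => //; rewrite lef_pV2 ?posrE // ler_nat /j leq_subr //.
Qed.

End Analytic.

Section Main.
Variables (R : realType) (X : Type) (f : nat -> X -> X) (k n : nat) (C : set (set X)).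
Hypothesis Cfin : finite_set C.
Hypothesis Ccov : \bigcup_(U in C) U = setT.

Let Jf m := join_preim f (fun i => (k ^ i)%N) C m.
Let Jg m := join_preim (comp_system f (k ^ n)%N) (fun i => (k ^ i)%N) C m.

Lemma facts : exists c : R, forall m,
  [/\ (exists s, covs (Jf m) s), (exists s, covs (Jg m) s),
      Nn R (Jf m) <= c ^+ m,
      Nn R (Jg m) <= Nn R (Jf (m + n)%N) &
      Nn R (Jf (m + n)%N) <= Nn R (Jf n) * Nn R (Jg m)].
Proof.
have [s0 Cs0] := (finite_seqP C).1 Cfin.
have hcov x : exists2 U, U \in s0 & U x.
  have : (\bigcup_(U in C) U) x by rewrite Ccov.
  by move=> [U CU Ux]; exists U => //; rewrite Cs0 in CU.
have HJf : forall m, (exists s, covs (Jf m) s) /\ Nn R (Jf m) <= (size s0)%:R ^+ m.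
  elim => [|m [[s hs] IH]].
    split; first by exists [:: setT]; exact: covJf0.
    by rewrite expr0; apply: (le_trans (Nn_le R (covJf0 f k C))).
  pose Pm := [set (ncomp f 0 (k ^ m.+1)%N) @^-1` U | U in C].
  have hP : covs Pm [seq (ncomp f 0 (k ^ m.+1)%N) @^-1` U | U <- s0].
    split.
      by move=> V /mapP [U Us ->]; exists U => //; rewrite Cs0.
    move=> x; have [U Us Ux] := hcov (ncomp f 0 (k ^ m.+1)%N x).
    by exists ((ncomp f 0 (k ^ m.+1)%N) @^-1` U) => //; apply: map_f.
  have [[u hu] hj] := Nn_join R hs hP.
  have [hex hle] := Nn_refine R (@refC X f k C m) hu.
  split => //.
  apply: (le_trans hle); apply: (le_trans hj).
  rewrite exprS [X in _ <= X]mulrC; apply: ler_pM => //.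
  - by have [t [_ ->]] := Nn_attained R hs.
  - by have [t [_ ->]] := Nn_attained R hP.
  - by apply: (le_trans (Nn_le R hP)); rewrite size_map.
exists ((size s0)%:R : R); move=> m.
have [[s hs] hb] := HJf (m + n)%N.
have [[sg hsg] hg] := Nn_refine R (@refA X f k n C m) hs.
have [[sn hsn] _] := HJf n.
have [[u hu] hj] := Nn_join R hsn hsg.
have [_ hB] := Nn_refine R (@refB X f k n C m) hu.
split => //.
- by have [] := HJf m.
- by exists sg.
- by have [] := HJf m.
- exact: le_trans hB hj.
Qed.

End Main.

Theorem proposition4p2 (R : realType) (X : pseudoMetricType R)
  (HX : hausdorff_space X) (Hc : compact [set: X])
  (f : nat -> X -> X) (Hf : forall n, continuous (f n))
  (k : nat) (Hk : (1 <= k)%N) (n : nat) (Hn : (1 <= n)%N) :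
  @hA R X (fun i => (k ^ i)%N) (comp_system f (k ^ n)%N)
  = @hA R X (fun i => (k ^ i)%N) f.
Proof.
rewrite /hA; congr ereal_sup; apply: eq_imagel => C [Cfin [_ Ccov]].
case: (pselect (exists x : X, True)) => [[x0 _] | nX]; last first.
  have nX' : X -> False by move=> x; apply: nX; exists x.
  congr limn_esup; apply: funext => m.
  have e (A : set (set X)) : fine (@Ncov R X A) = 0 := Nn_empty R A nX'.
  by rewrite !e.
have [c hc] := facts R f k n Cfin Ccov.
apply: (@analytic R (fun m => Nn R (join_preim f (fun i => (k ^ i)%N) C m))
  (fun m => Nn R (join_preim (comp_system f (k ^ n)%N) (fun i => (k ^ i)%N) C m)) n c).
- by move=> m; have [[s hs] _ _ _ _] := hc m; apply: Nn_ge1 hs.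
- by move=> m; have [_ [s hs] _ _ _] := hc m; apply: Nn_ge1 hs.
- by move=> m; have [_ _ _ h _] := hc m.
- by move=> m; have [_ _ _ _ h] := hc m.
- by move=> m; have [_ _ h _ _] := hc m.
Qed.
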